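(* Let $x\in V(D^+)\setminus\{s\}$ and $y\in C(x)$. Then there are two internally disjoint directed paths in $D^+$, one from $I_s(x)$ to $x$ and one from $y$ to $x$.
   Context: $G=(V,E,w)$ is a simple, connected, undirected graph with positive edge lengths, $s,t\in V$. $D$ is the union of all shortest $st$-paths of $G$, and $D^+$ is the directed acyclic graph obtained from $D$ by orienting every edge toward $t$. $x\prec y$ means $x$ is an ancestor of $y$ in $D^+$ (a directed path of positive length from $x$ to $y$ exists). For $x\neq s$, $v\neq x$ is an $s$-dominator of $x$ if every directed path from $s$ to $x$ in $D^+$ contains $v$, and $I_s(x)$ is the $s$-dominator of $x$ closest to $x$ (every other $s$-dominator of $x$ is an $s$-dominator of $I_s(x)$). For $x\neq s$, $C(x)=\{v\in V(D^+): I_s(x)\prec v\prec x\}$. Two paths are internally disjoint if they share no vertex other than their endpoints. *)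

(* Defs.v *)
From HB Require Import structures.
From mathcomp Require Import all_boot all_order all_algebra.
Set Implicit Arguments. Unset Strict Implicit. Unset Printing Implicit Defensive.
Import Order.TTheory GRing.Theory Num.Theory.
Local Open Scope ring_scope.

(* G = (T, e, w): simple undirected graph on a finite vertex type T with
   adjacency relation e and edge lengths w (symmetric, positive on edges). *)
Definition simple_graph (T : finType) (e : rel T) : Prop :=
  symmetric e /\ irreflexive e.

Definition connected_graph (T : finType) (e : rel T) : Prop :=
  forall x y : T, connect e x y.

Definition pos_lengths (T : finType) (R : realFieldType) (e : rel T)
  (w : T -> T -> R) : Prop :=
  (forall x y, w x y = w y x) /\ (forall x y, e x y -> 0 < w x y).

Fixpoint sp_wlen (T : finType) (R : realFieldType) (w : T -> T -> R)
  (x : T) (q : seq T) : R :=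
  match q with
  | [::] => 0
  | y :: q' => w x y + sp_wlen w y q'
  end.

Definition sp_gpath (T : finType) (e : rel T) (x b : T) (q : seq T) : Prop :=
  path e x q /\ last x q = b /\ uniq (x :: q).

Definition sp_shortest (T : finType) (R : realFieldType) (e : rel T)
  (w : T -> T -> R) (s t : T) (q : seq T) : Prop :=
  sp_gpath e s t q /\ forall q', sp_gpath e s t q' -> sp_wlen w s q <= sp_wlen w s q'.

Definition sp_inD (T : finType) (R : realFieldType) (e : rel T)
  (w : T -> T -> R) (s t : T) (v : T) : Prop :=
  exists q, sp_shortest e w s t q /\ v \in s :: q.

(* arcs of D^+: edges of sp_shortest s-t paths, oriented toward t *)
Definition sp_arc (T : finType) (R : realFieldType) (e : rel T)
  (w : T -> T -> R) (s t : T) (u v : T) : Prop :=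
  exists q, sp_shortest e w s t q /\
    exists p1 p2, s :: q = p1 ++ u :: v :: p2.

Fixpoint sp_dwalk (T : Type) (a : T -> T -> Prop) (x : T) (q : seq T) : Prop :=
  match q with
  | [::] => True
  | y :: q' => a x y /\ sp_dwalk a y q'
  end.

Definition sp_dpath (T : finType) (a : T -> T -> Prop) (x y : T) (p : seq T)
  : Prop :=
  exists q, p = x :: q /\ sp_dwalk a x q /\ last x q = y.

Definition sp_anc (T : finType) (a : T -> T -> Prop) (x y : T) : Prop :=
  exists q, q <> [::] /\ sp_dwalk a x q /\ last x q = y.

Definition sp_sdom (T : finType) (a : T -> T -> Prop) (s x v : T) : Prop :=
  v <> x /\ forall p, sp_dpath a s x p -> v \in p.

(* i = I_s(x): the s-dominator of x closest to x, i.e. every other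
   s-dominator of x is an s-dominator of i *)
Definition sp_idom (T : finType) (a : T -> T -> Prop) (s x i : T) : Prop :=
  sp_sdom a s x i /\ forall v, sp_sdom a s x v -> v <> i -> sp_sdom a s i v.

Definition sp_inC (T : finType) (a : T -> T -> Prop) (inV : T -> Prop)
  (s x i v : T) : Prop :=
  sp_idom a s x i /\ inV v /\ sp_anc a i v /\ sp_anc a v x.

(* Main.v *)
Require Import Defs.
From mathcomp Require Import all_boot all_order all_algebra.
From Stdlib Require Import ClassicalEpsilon Classical.
From mathcomp Require Import zify.
Set Implicit Arguments. Unset Strict Implicit. Unset Printing Implicit Defensive.
Import Order.TTheory GRing.Theory Num.Theory.

Lemma cons_nil (X : Type) (a : X) l : a :: l <> [::]. Proof. by []. Qed.

Section PartA.
Local Open Scope ring_scope.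
Variables (T : finType) (R : realFieldType) (e : rel T) (w : T -> T -> R).
Hypothesis pos : forall x y, e x y -> 0 < w x y.

Lemma wlen_cat x q1 q2 :
  sp_wlen w x (q1 ++ q2) = sp_wlen w x q1 + sp_wlen w (last x q1) q2.
Proof. by elim: q1 x => [|y q1 IH] x /=; rewrite ?add0r // IH addrA. Qed.

Lemma wlen_ge0 x q : path e x q -> 0 <= sp_wlen w x q.
Proof.
elim: q x => [|y q IH] x //= /andP[exy pq].
by apply: addr_ge0; [exact: ltW (pos exy) | exact: IH].
Qed.

Lemma shortcut x q : path e x q -> exists q',
  [/\ path e x q', last x q' = last x q, uniq (x :: q'), {subset q' <= q}
   & sp_wlen w x q' <= sp_wlen w x q].
Proof.
move: {2}(size q) (leqnn (size q)) => n.
elim: n x q => [|n IH] x q.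
  case: q => [|//] _ _; exists [::]; split => //.
move=> Hs Hp.
case: (boolP (x \in q)) => xin.
  case/splitPr: xin Hs Hp => q1 q2 Hs Hp.
  move: Hp; rewrite cat_path /= => /and3P[p1 ex p2].
  have Hs2 : (size q2 <= n)%N by move: Hs; rewrite size_cat /=; lia.
  have [q' [pq' lq' uq' sq' wq']] := IH x q2 Hs2 p2.
  exists q'; split => //.
  - by rewrite last_cat /= lq'.
  - by move=> z /sq' zq; rewrite mem_cat inE zq !orbT.
  - rewrite wlen_cat /=. apply: (le_trans wq').
    rewrite addrA lerDr; apply: addr_ge0; [exact: wlen_ge0 | exact: ltW (pos ex)].
case: q xin Hs Hp => [|y q] xin Hs Hp; first by exists [::]; split.
move: Hp => /= /andP[exy pq].
have [q' [pq' lq' uq' sq' wq']] := IH y q Hs pq.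
exists (y :: q'); split => //=.
- by rewrite exy pq'.
- apply/andP; split; last exact: uq'.
  apply/negP => xq; move/negP: xin; apply.
  by move: xq; rewrite !inE => /orP[->//|/sq' ->]; rewrite orbT.
- by move=> z; rewrite !inE => /orP[->//|/sq' ->]; rewrite orbT.
- by rewrite lerD2l.
Qed.

Variables (s t : T).

Definition isdist v (r : R) :=
  (exists p, sp_gpath e s v p /\ sp_wlen w s p = r) /\
  (forall p, sp_gpath e s v p -> r <= sp_wlen w s p).

Lemma isdist_uniq v r1 r2 : isdist v r1 -> isdist v r2 -> r1 = r2.
Proof.
move=> [[p1 [g1 <-]] m1] [[p2 [g2 <-]] m2].
by apply/le_anti; rewrite m1 // m2.
Qed.

Lemma on_shortest q q1 q2 : sp_shortest e w s t q -> q = q1 ++ q2 ->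
  isdist (last s q1) (sp_wlen w s q1).
Proof.
move=> [[pq [lq uq]] minq] Eq; subst q.
move: (pq); rewrite cat_path => /andP[p1 p2].
split.
  exists q1; split => //; split => //; split => //.
  by move: uq; rewrite -cat_cons cat_uniq => /andP[].
move=> r [pr [lr ur]].
have pw : path e s (r ++ q2) by rewrite cat_path pr lr.
have [r' [pr' lr' ur' _ wr']] := shortcut pw.
have g' : sp_gpath e s t r' by split => //; split => //; rewrite lr' last_cat lr -last_cat.
have := minq r' g'.
move=> H; have := le_trans H wr'.
by rewrite !wlen_cat lr lerD2r.
Qed.

Lemma arc_dist u v : sp_arc e w s t u v ->
  exists r1 r2, isdist u r1 /\ isdist v r2 /\ r1 < r2.
Proof.
move=> [q [sh [p1 [p2 E]]]].
have pq : path e s q by case: sh => [[]].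
case: p1 E => [|z p1] /= [Es Eq].
  subst u q.
  exists 0, (sp_wlen w s [:: v]); split.
    exact: (@on_shortest (v :: p2) [::] (v :: p2) sh).
  split; first exact: (@on_shortest (v :: p2) [:: v] p2 sh).
  by move: pq => /= /andP[esv _]; rewrite addr0 pos.
subst z q.
exists (sp_wlen w s (rcons p1 u)), (sp_wlen w s (rcons (rcons p1 u) v)).
split.
  have := @on_shortest _ (rcons p1 u) (v :: p2) sh.
  by rewrite last_rcons cat_rcons; apply.
split.
  have := @on_shortest _ (rcons (rcons p1 u) v) p2 sh.
  by rewrite last_rcons !cat_rcons; apply.
rewrite -[rcons (rcons p1 u) v]cats1 wlen_cat last_rcons /= addr0 ltrDl pos //.
move: pq; rewrite -cat_rcons cat_path last_rcons => /andP[_] /= /andP[] //.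
Qed.

Lemma walk_dist u q : sp_dwalk (sp_arc e w s t) u q -> q <> [::] ->
  exists r1 r2, isdist u r1 /\ isdist (last u q) r2 /\ r1 < r2.
Proof.
elim: q u => [|v q IH] u //= [Auv W] _.
case: q IH W => [|z q] IH W; first exact: arc_dist.
have [r1 [r2 [d1 [d2 l12]]]] := arc_dist Auv.
have [r1' [r2' [d1' [d2' l12']]]] := IH v W (@cons_nil _ _ _).
exists r1, r2'; split => //; split => //.
by rewrite (isdist_uniq d2 d1') in l12; apply: lt_trans l12 l12'.
Qed.

Lemma arc_acyclic u q : sp_dwalk (sp_arc e w s t) u q -> last u q = u -> q = [::].
Proof.
move=> W L; case: q W L => [//|v q] W L.
have [r1 [r2 [d1 [d2 l]]]] := walk_dist W (@cons_nil _ _ _).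
rewrite /= in L d2; rewrite L in d2.
by rewrite (isdist_uniq d2 d1) ltxx in l.
Qed.
End PartA.
Definition pb (P : Prop) : bool :=
  match excluded_middle_informative P with left _ => true | right _ => false end.
Lemma pbE P : pb P <-> P.
Proof. by rewrite /pb; case: excluded_middle_informative. Qed.

Lemma split_list (T : eqType) (v u : T) q : v \in u :: q ->
  exists q1 q2, q = q1 ++ q2 /\ last u q1 = v /\ v \notin belast u q1.
Proof.
elim: q u => [|y q IH] u.
  by rewrite inE => /eqP->; exists [::], [::].
case: (eqVneq v u) => [->|vu] H; first by exists [::], (y :: q).
have: v \in y :: q by move: H; rewrite inE (negbTE vu).
case/IH => q1 [q2 [-> [L B]]].
exists (y :: q1), q2; split => //; split => //=.
by rewrite inE negb_or vu.
Qed.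

Section PartB.
Variables (T : finType) (A : T -> T -> Prop).
Hypothesis acyc : forall u q, sp_dwalk A u q -> last u q = u -> q = [::].

Lemma dwalk_cat x q1 q2 :
  sp_dwalk A x (q1 ++ q2) <-> sp_dwalk A x q1 /\ sp_dwalk A (last x q1) q2.
Proof.
elim: q1 x => [|y q1 IH] x /=; first by split => // [[]].
rewrite IH; tauto.
Qed.

Lemma dpath_cat u v z p1 p2 : sp_dpath A u v p1 -> sp_dpath A v z p2 ->
  sp_dpath A u z (p1 ++ behead p2).
Proof.
move=> [q1 [-> [W1 L1]]] [q2 [-> [W2 L2]]].
exists (q1 ++ q2); split => //; split.
  by apply/dwalk_cat; rewrite L1.
by rewrite last_cat L1.
Qed.

Lemma dpath_split u z p v : sp_dpath A u z p -> v \in p ->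
  exists q1 q2, [/\ p = u :: q1 ++ q2, last u q1 = v, v \notin belast u q1,
   sp_dpath A u v (u :: q1) & sp_dpath A v z (v :: q2)].
Proof.
move=> [q [-> [W L]]] vin.
have [q1 [q2 [Eq [L1 B]]]] := split_list vin.
subst q; move/dwalk_cat: W => [W1 W2].
exists q1, q2; split => //.
- by exists q1.
- exists q2; split => //; rewrite -L1; split => //.
  by rewrite -last_cat.
Qed.

Definition reach u v := exists p, sp_dpath A u v p.

Lemma reach_refl u : reach u u.
Proof. by exists [:: u], [::]. Qed.

Lemma dpath_nil u v q : sp_dpath A u v (u :: q) -> u <> v -> q <> [::].
Proof. by move=> [q' [[E] [_ L]]] uv Eq; subst q q'; apply: uv. Qed.

Lemma no_cycle u v p1 p2 : sp_dpath A u v p1 -> sp_dpath A v u p2 -> u <> v -> False.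
Proof.
move=> H1 H2 uv.
have [q [E [W L]]] := dpath_cat H1 H2.
move: (H1) => [q1 [E1 _]]; subst p1.
have := acyc W L => q0; subst q.
case: q1 E H1 => [|y q1] //= [E] H1.
by have := dpath_nil H1 uv.
Qed.

Variable x : T.

Definition cut u v := forall p, sp_dpath A u x p -> v \in p.
Definition nocut u b := forall v, v <> x -> cut u v -> cut b v -> False.
Definition res u b := exists p1 p2, sp_dpath A u x p1 /\ sp_dpath A b x p2 /\
  (forall v, v \in p1 -> v \in p2 -> v = x).

Lemma res_sym u b : res u b -> res b u.
Proof.
move=> [p1 [p2 [H1 [H2 H]]]]; exists p2, p1; split => //; split => //.
by move=> v a b'; apply: H.
Qed.

Definition RS u := [set v | pb (reach u v)].

Lemma RS_lt u c : A u c -> #|RS c| < #|RS u|.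
Proof.
move=> Auc; apply: proper_card; apply/properP; split.
  apply/subsetP => v; rewrite !inE => /pbE [p Hp]; apply/pbE.
  exists (u :: p); case: Hp => q [-> [W L]].
  by exists (c :: q).
exists u; rewrite inE; first by apply/pbE; apply: reach_refl.
apply/negP => /pbE [p Hp].
have Huc : sp_dpath A u c [:: u; c] by exists [:: c].
apply: (no_cycle Huc Hp) => E; subst c.
by have := @acyc u [:: u] (conj Auc I) erefl.
Qed.

Lemma suffix_cut b P0 v1 v2 : cut b v2 -> sp_dpath A b x P0 -> v1 \in P0 ->
  v1 <> v2 -> index v1 P0 <= index v2 P0 ->
  forall p, sp_dpath A v1 x p -> v2 \in p.
Proof.
move=> cb2 HP0 v1in ne le p Hp.
apply: contraT => v2p.
have [q1 [q2 [E0 L1 B1 Hpre Hsuf]]] := dpath_split HP0 v1in.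
have Hw := dpath_cat Hpre Hp.
have := cb2 _ Hw.
case: Hp Hw v2p => q [Ep _] Hw v2p; subst p.
have v2q : v2 \notin q by move: v2p; rewrite inE negb_or => /andP[].
rewrite mem_cat /= (negbTE v2q) orbF.
rewrite lastI L1 mem_rcons inE => /orP[/eqP E|v2b]; first by subst v2; case: ne.
have EP : P0 = belast b q1 ++ v1 :: q2 by rewrite E0 -cat_cons lastI L1 cat_rcons.
move: le; rewrite EP !index_cat (negbTE B1) v2b /= eqxx addn0.
by rewrite leqNgt index_mem v2b.
Qed.

Lemma cut_via c v1 v2 : cut c v1 -> (forall p, sp_dpath A v1 x p -> v2 \in p) ->
  cut c v2.
Proof.
move=> c1 H p Hp.
have [q1 [q2 [E L B Hpre Hsuf]]] := dpath_split Hp (c1 _ Hp).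
have := H _ Hsuf; rewrite E inE => /orP[/eqP->|v2q].
  by rewrite -cat_cons mem_cat -L mem_last.
by rewrite -cat_cons mem_cat v2q orbT.
Qed.

Lemma step u b :
  (forall c, #|RS c| < #|RS u| -> reach c x -> nocut c b -> res c b) ->
  u <> x -> reach u x -> reach b x -> ~ reach b u -> nocut u b -> res u b.
Proof.
move=> IH ux [pu Hpu] [P0 HP0] nbu nc.
case: (classic (exists c, A u c /\ reach c x /\ nocut c b)).
  move=> [c [Auc [rc ncb]]].
  have [p1 [p2 [H1 [H2 H]]]] := IH c (RS_lt Auc) rc ncb.
  exists (u :: p1), p2; split.
    case: H1 => q [-> [W L]]; exists (c :: q); split => //.
  split => // v; rewrite inE => /orP[/eqP->|vp1] vp2; last exact: H.
  have [q1 [q2 [_ _ _ Hpre _]]] := dpath_split H2 vp2.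
  by case: nbu; exists (b :: q1).
move=> nex.
have bad : forall c, A u c -> reach c x ->
    exists v, v <> x /\ cut c v /\ cut b v.
  move=> c Auc rc; apply: NNPP => H; apply: nex; exists c; split => //; split => //.
  by move=> v vx cv bv; apply: H; exists v.
have [c0 [Auc0 rc0]] : exists c0, A u c0 /\ reach c0 x.
  case: Hpu => q [Ep [W L]]; subst pu.
  case: q W L => [|c q] /= W L; first by case: ux.
  by case: W => Auc W; exists c; split => //; exists (c :: q), q.
pose Cut v := pb (exists c, A u c /\ reach c x /\ v <> x /\ cut c v /\ cut b v).
have [v0 [v0x [c0v0 bv0]]] := bad c0 Auc0 rc0.
have Cv0 : Cut v0 by apply/pbE; exists c0.
case: (arg_maxnP (fun v => index v P0) Cv0) => vs /pbE [cs [_ [_ [vsx [_ bvs]]]]] Hmax.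
exfalso; apply: (nc vs vsx) => //.
move=> p Hp.
case: (Hp) => q [Ep [W L]]; subst p.
case: q W L Hp => [|c q] /= W L Hp; first by case: ux.
case: W => Auc W.
have rc : reach c x by exists (c :: q), q.
have [vc [vcx [cvc bvc]]] := bad c Auc rc.
have Cvc : Cut vc by apply/pbE; exists c.
have le := Hmax _ Cvc.
have : cut c vs.
  case: (eqVneq vc vs) => [<-//|ne].
  apply: (cut_via cvc); apply: (suffix_cut bvs HP0) => //.
    exact: bvc.
  by move=> E; rewrite E eqxx in ne.
move=> cvs; have Hc : sp_dpath A c x (c :: q) by exists q.
by rewrite inE (cvs _ Hc) orbT.
Qed.

Lemma fan n : forall u b, #|RS u| + #|RS b| < n ->
  reach u x -> reach b x -> nocut u b -> res u b.
Proof.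
elim: n => [//|n IH] u b Hn ru rb nc.
case: (eqVneq u x) => [->|ux].
  case: rb => p Hp; exists [:: x], p; split; first by exists [::].
  by split => // v; rewrite inE => /eqP.
case: (eqVneq b x) => [->|bx].
  case: ru => p Hp; exists p, [:: x]; split => //; split; first by exists [::].
  by move=> v _; rewrite inE => /eqP.
have ub : u <> b.
  move=> E; subst b; apply: (nc u) => //; first by apply/eqP.
    by move=> p [q [-> _]]; rewrite inE eqxx.
  by move=> p [q [-> _]]; rewrite inE eqxx.
case: (classic (reach b u)) => rbu.
  have nub : ~ reach u b.
    by move=> [p Hp]; case: rbu => p' Hp'; apply: (no_cycle Hp Hp').
  apply: res_sym; apply: step => //.
  - move=> c Hc rc ncb; apply: IH => //; first by lia.
  - by apply/eqP.
  - by move=> v vx H1 H2; apply: (nc v vx).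
apply: step => //.
- move=> c Hc rc ncb; apply: IH => //; lia.
- by apply/eqP.
Qed.
End PartB.

Lemma walk_of (X : Type) (B : X -> X -> Prop) pre x r :
  (forall p1 p2 u v, pre ++ x :: r = p1 ++ u :: v :: p2 -> B u v) ->
  sp_dwalk B x r.
Proof.
elim: r pre x => [|y r IH] pre x H //=; split.
  exact: (H pre r).
apply: (IH (rcons pre x)) => p1 p2 u v E; apply: (H p1 p2).
by rewrite -E cat_rcons.
Qed.

Theorem lemma4 (T : finType) (R : realFieldType) (e : rel T)
  (w : T -> T -> R) (s t : T) :
  simple_graph e -> connected_graph e -> pos_lengths e w ->
  forall x : T, sp_inD e w s t x -> x <> s ->
  forall i : T, sp_idom (sp_arc e w s t) s x i ->
  forall y : T, sp_inC (sp_arc e w s t) (sp_inD e w s t) s x i y ->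
  exists p1 p2 : seq T,
    sp_dpath (sp_arc e w s t) i x p1 /\ sp_dpath (sp_arc e w s t) y x p2 /\
    (forall v, v \in p1 -> v \in p2 ->
       (v \in [:: i; x]) && (v \in [:: y; x])).
Proof.
move=> _ _ [_ pos] x [q [sh xin]] xs i [[ix domi] idomi] y [_ [_ [ancIy ancYx]]].
set A := sp_arc e w s t.
have acyc : forall u q, sp_dwalk A u q -> last u q = u -> q = [::].
  by move=> u q'; apply: arc_acyclic.
have Ps : sp_dpath A s t (s :: q).
  exists q; split => //; split; last by case: sh => [[_ []]].
  apply: (walk_of (pre := [::])) => p1 p2 u v E.
  by exists q; split => //; exists p1, p2.
have [qx1 [qx2 [_ _ _ Psx _]]] := dpath_split Ps xin.
have [qa [qb [_ La _ Psi Pix]]] := dpath_split Psx (domi _ Psx).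
case: ancYx => qy [qyn [Wy Ly]].
have Py : sp_dpath A y x (y :: qy) by exists qy.
case: ancIy => qi [qin [Wi Li]].
have Piy : sp_dpath A i y (i :: qi) by exists qi.
have iy : i <> y.
  by move=> E; rewrite -E in Li; apply: qin; apply: acyc Wi Li.
have nc : nocut A x i y.
  move=> v vx civ cyv.
  have sdv : sp_sdom A s x v by split => //; apply: (cut_via domi civ).
  case: (eqVneq v i) => [E|vi].
    subst v.
    have [q1 [q2 [_ _ _ Pyi _]]] := dpath_split Py (cyv _ Py).
    exact: (no_cycle acyc Piy Pyi iy).
  have [_ H] := idomi v sdv (elimN eqP vi).
  have [q1 [q2 [_ _ _ _ Pvi]]] := dpath_split Psi (H _ Psi).
  have [q3 [q4 [_ _ _ Piv _]]] := dpath_split Pix (civ _ Pix).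
  apply: (no_cycle acyc Piv Pvi) => E; subst v; by rewrite eqxx in vi.
have := @fan T A acyc x _ i y (ltnSn _) (ex_intro _ _ Pix) (ex_intro _ _ Py) nc.
move=> [p1 [p2 [H1 [H2 H]]]]; exists p1, p2; split => //; split => //.
by move=> v a b; rewrite (H v a b) !inE eqxx !orbT.
Qed.
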